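(* Let $a>0$ and $f\in\mathcal C_a$. Then $\mathrm{Sh}_0(f):\mathbb R\to\mathbb R$ satisfies: $\mathrm{Sh}_0(f)(x)=f(x)$ for all $x\le-a$; $\mathrm{Sh}_0(f)(2x+f(x))=f(x)$ for all $x\in(-a,0)$; and $\mathrm{Sh}_0(f)(x)=x$ for all $x\ge f(0)$.
   Context: $\mathcal C_a$ is the set of $C^1$ functions $f:\mathbb R\to\mathbb R$ that are even, satisfy $f(s)=|s|$ for $|s|\ge a$ and are strictly convex on $[-a,a]$. For $f\in\mathcal C_a$ and $\alpha\in[0,1)$: $F_\alpha(s)=f(s)-\alpha s$, $x_\alpha^+=(f')^{-1}(\alpha)\in[0,a)$ (inverse of $f':[-a,a]\to[-1,1]$); let $F_\alpha^{-1}$ be the inverse of $F_\alpha|_{[x_\alpha^+,\infty)}$, $\phi=F_\alpha^{-1}\circ F_\alpha$, $\delta_x=(1-\alpha)^{-1}F_\alpha(x)-\phi(x)$, $s_\alpha=x_\alpha^++\delta_{x_\alpha^+}$; $x\mapsto x+\delta_x$ is an increasing bijection $(-\infty,x_\alpha^+]\to(-\infty,s_\alpha]$ with inverse $\tau$. Define $\mathrm{Sh}_\alpha(f)(x)=\alpha x+F_\alpha(\tau(x))$ for $x\le s_\alpha$ and $=x$ for $x>s_\alpha$. *)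

(* Defs.v *)
From Stdlib Require Import Reals Lra ClassicalEpsilon.
From Coquelicot Require Import Coquelicot.
Open Scope R_scope.

Definition in_Ca (a : R) (f : R -> R) : Prop :=
  (forall x, ex_derive f x) /\
  (forall x, continuous (Derive f) x) /\
  (forall s, f (- s) = f s) /\
  (forall s, a <= Rabs s -> f s = Rabs s) /\
  (forall x y t, -a <= x -> x < y -> y <= a -> 0 < t < 1 ->
      f (t * x + (1 - t) * y) < t * f x + (1 - t) * f y).

(* Inverse of g restricted to the domain D (chosen by Hilbert epsilon;
   meaningful when g is a bijection from D onto its range). *)
Definition inv_on (g : R -> R) (D : R -> Prop) (y : R) : R :=
  epsilon (inhabits 0) (fun x => D x /\ g x = y).

Section Shift.
Variables (a alpha : R) (f : R -> R).

Definition Falpha (s : R) : R := f s - alpha * s.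

Definition xplus : R := inv_on (Derive f) (fun x => -a <= x <= a) alpha.

Definition Finv (y : R) : R := inv_on Falpha (fun s => xplus <= s) y.

Definition phi (x : R) : R := Finv (Falpha x).

Definition delta (x : R) : R := Falpha x / (1 - alpha) - phi x.

Definition s_alpha : R := xplus + delta xplus.

Definition tau (y : R) : R := inv_on (fun x => x + delta x) (fun x => x <= xplus) y.

Definition Sh (x : R) : R :=
  if Rle_dec x s_alpha then alpha * x + Falpha (tau x) else x.

End Shift.

(* Main.v *)
Require Import Defs.
From Stdlib Require Import Reals Lra ClassicalEpsilon.
From Coquelicot Require Import Coquelicot.
Open Scope R_scope.

Lemma inv_on_eq g (D : R -> Prop) y x0 : D x0 -> g x0 = y ->
  (forall x, D x -> g x = y -> x = x0) -> inv_on g D y = x0.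
Proof.
  intros H H0 H1. unfold inv_on.
  destruct (epsilon_spec (inhabits 0) (fun x => D x /\ g x = y)
     (ex_intro _ x0 (conj H H0))) as [A B].
  apply H1; auto.
Qed.

Lemma pick_h del d : 0 < del -> 0 < d -> exists h, 0 < h /\ h < del /\ h < d.
Proof.
  intros. exists (Rmin del d / 2).
  pose proof (Rmin_l del d). pose proof (Rmin_r del d). pose proof (Rmin_pos del d H H0).
  lra.
Qed.

Lemma dq_right_le f x l d C : derivable_pt_lim f x l -> 0 < d ->
  (forall h, 0 < h < d -> (f (x+h) - f x)/h <= C) -> l <= C.
Proof.
  intros Hd Hd0 Hq. destruct (Rle_dec l C) as [r|r]; auto. exfalso.
  destruct (Hd (l - C)) as [del Hdel]; [lra|].
  destruct (pick_h del d (cond_pos del) Hd0) as [h [h1 [h2 h3]]].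
  assert (Hh: Rabs h < del) by (rewrite Rabs_right; lra).
  specialize (Hdel h ltac:(lra) Hh). apply Rabs_def2 in Hdel.
  specialize (Hq h ltac:(lra)). lra.
Qed.

Lemma dq_left_ge f x l d C : derivable_pt_lim f x l -> 0 < d ->
  (forall h, -d < h < 0 -> C <= (f (x+h) - f x)/h) -> C <= l.
Proof.
  intros Hd Hd0 Hq. destruct (Rle_dec C l) as [r|r]; auto. exfalso.
  destruct (Hd (C - l)) as [del Hdel]; [lra|].
  destruct (pick_h del d (cond_pos del) Hd0) as [h [h1 [h2 h3]]].
  assert (Hh: Rabs (-h) < del) by (rewrite Rabs_left; lra).
  specialize (Hdel (-h) ltac:(lra) Hh). apply Rabs_def2 in Hdel.
  specialize (Hq (-h) ltac:(lra)). lra.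
Qed.

Lemma div_lt_pos u h s : 0 < h -> u < h * s -> u / h <= s.
Proof.
  intros. apply Rlt_le. unfold Rdiv. apply Rmult_lt_reg_r with h; auto.
  rewrite Rmult_assoc, Rinv_l by lra. lra.
Qed.

Lemma div_lt_neg u h s : h < 0 -> u < h * s -> s <= u / h.
Proof.
  intros. apply Rlt_le. unfold Rdiv. apply Rmult_lt_reg_r with (-h); [lra|].
  replace (u * / h * - h) with (-u) by (field; lra). lra.
Qed.

Section Main.
Variables (a : R) (f : R -> R).
Hypothesis Ha : 0 < a.
Hypothesis Hder : forall x, ex_derive f x.
Hypothesis Hev : forall s, f (- s) = f s.
Hypothesis Habs : forall s, a <= Rabs s -> f s = Rabs s.
Hypothesis Hcvx : forall x y t, -a <= x -> x < y -> y <= a -> 0 < t < 1 ->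
      f (t * x + (1 - t) * y) < t * f x + (1 - t) * f y.

Lemma DL x : derivable_pt_lim f x (Derive f x).
Proof. apply is_derive_Reals, Derive_correct, Hder. Qed.

Lemma tangent x y : -a <= x <= a -> -a <= y <= a ->
  f y >= f x + Derive f x * (y - x).
Proof.
  intros Hx Hy.
  destruct (Rtotal_order x y) as [Hl|[He|Hg]].
  - set (s := (f y - f x)/(y-x)).
    assert (Es : f y - f x = s * (y - x)) by (unfold s; field; lra).
    assert (Hls : Derive f x <= s).
    { apply (dq_right_le f x _ (y - x)); [apply DL|lra|].
      intros h Hh. apply div_lt_pos; [lra|].
      pose proof (Hcvx x y (1 - h/(y-x)) ltac:(lra) Hl ltac:(lra)) as Hc.
      assert (0 < h/(y-x) < 1).
      { split. apply Rdiv_lt_0_compat; lra.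
        apply Rmult_lt_reg_r with (y-x); [lra|]. unfold Rdiv.
        rewrite Rmult_assoc, Rinv_l by lra. lra. }
      specialize (Hc ltac:(lra)).
      replace ((1 - h / (y - x)) * x + (1 - (1 - h / (y - x))) * y) with (x + h) in Hc
        by (field; lra).
      replace ((1 - h / (y - x)) * f x + (1 - (1 - h / (y - x))) * f y)
        with (f x + h * s) in Hc by (unfold s; field; lra).
      lra. }
    nra.
  - subst. lra.
  - set (s := (f x - f y)/(x-y)).
    assert (Es : f x - f y = s * (x - y)) by (unfold s; field; lra).
    assert (Hls : s <= Derive f x).
    { apply (dq_left_ge f x _ (x - y)); [apply DL|lra|].
      intros h Hh. apply div_lt_neg; [lra|].
      assert (0 < -h/(x-y) < 1).
      { split. apply Rdiv_lt_0_compat; lra.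
        apply Rmult_lt_reg_r with (x-y); [lra|]. unfold Rdiv.
        rewrite Rmult_assoc, Rinv_l by lra. lra. }
      pose proof (Hcvx y x (-h/(x-y)) ltac:(lra) Hg ltac:(lra) H) as Hc.
      replace (- h / (x - y) * y + (1 - - h / (x - y)) * x) with (x + h) in Hc
        by (field; lra).
      replace (- h / (x - y) * f y + (1 - - h / (x - y)) * f x)
        with (f x + h * s) in Hc by (unfold s; field; lra).
      lra. }
    nra.
Qed.

Lemma conv2 x y : -a <= x <= a -> -a <= y <= a -> x <> y ->
  f ((x + y)/2) < (f x + f y)/2.
Proof.
  intros Hx Hy Hn. destruct (Rtotal_order x y) as [Hl|[He|Hg]].
  - pose proof (Hcvx x y (1/2) ltac:(lra) Hl ltac:(lra) ltac:(lra)) as H.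
    replace (1/2 * x + (1 - 1/2) * y) with ((x+y)/2) in H by field. lra.
  - contradiction.
  - pose proof (Hcvx y x (1/2) ltac:(lra) Hg ltac:(lra) ltac:(lra)) as H.
    replace (1/2 * y + (1 - 1/2) * x) with ((x+y)/2) in H by field. lra.
Qed.

Lemma tangent_strict x y : -a <= x <= a -> -a <= y <= a -> x <> y ->
  f y > f x + Derive f x * (y - x).
Proof.
  intros Hx Hy Hn.
  pose proof (tangent x ((x+y)/2) Hx ltac:(lra)).
  pose proof (conv2 x y Hx Hy Hn).
  replace (Derive f x * ((x + y) / 2 - x)) with (Derive f x * (y - x) / 2) in H by field.
  lra.
Qed.

Lemma D0 : Derive f 0 = 0.
Proof.
  pose proof (DL 0) as Hd. set (l := Derive f 0) in *.
  destruct (Req_dec l 0) as [E|E]; auto. exfalso.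
  destruct (Hd (Rabs l)) as [del Hdel]; [apply Rabs_pos_lt; auto|].
  destruct (pick_h del 1 (cond_pos del) ltac:(lra)) as [h [h1 [h2 h3]]].
  pose proof (Hdel h ltac:(lra) ltac:(rewrite Rabs_right; lra)) as A.
  pose proof (Hdel (-h) ltac:(lra) ltac:(rewrite Rabs_left; lra)) as B.
  rewrite Rplus_0_l in A, B. rewrite Hev in B.
  replace ((f h - f 0) / - h) with (- ((f h - f 0)/h)) in B by (field; lra).
  apply Rabs_def2 in A. apply Rabs_def2 in B.
  destruct (Rle_dec 0 l).
  - rewrite Rabs_right in A, B; lra.
  - rewrite Rabs_left in A, B; lra.
Qed.

Lemma xplus0 : xplus a 0 f = 0.
Proof.
  unfold xplus. apply inv_on_eq; [lra|apply D0|].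
  intros x Hx Dx. destruct (Req_dec x 0) as [E|E]; auto. exfalso.
  pose proof (tangent_strict x 0 Hx ltac:(lra) E).
  pose proof (conv2 (-x) x ltac:(lra) Hx ltac:(lra)).
  replace ((- x + x)/2) with 0 in H0 by field. rewrite Hev in H0.
  rewrite Dx in H. lra.
Qed.

Lemma fmono s s' : 0 <= s -> s < s' -> f s < f s'.
Proof.
  intros H0 H1.
  assert (Hc : forall s', s < s' -> s' <= a -> f s < f s').
  { intros u Hu Ha'. set (t := (u - s)/(2*u)).
    assert (0 < t < 1).
    { unfold t; split. apply Rdiv_lt_0_compat; lra.
      apply Rmult_lt_reg_r with (2*u); [lra|]. unfold Rdiv.
      rewrite Rmult_assoc, Rinv_l by lra. lra. }
    pose proof (Hcvx (-u) u t ltac:(lra) ltac:(lra) Ha' H) as Hc.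
    replace (t * - u + (1 - t) * u) with s in Hc by (unfold t; field; lra).
    rewrite Hev in Hc. lra. }
  destruct (Rle_dec s' a); [apply Hc; auto|].
  rewrite (Habs s') by (rewrite Rabs_right; lra). rewrite Rabs_right by lra.
  destruct (Rle_dec a s).
  - rewrite Habs by (rewrite Rabs_right; lra). rewrite Rabs_right; lra.
  - destruct (Req_dec s a); [lra|].
    pose proof (Hc a ltac:(lra) ltac:(lra)).
    rewrite (Habs a) in H2 by (rewrite Rabs_right; lra). rewrite Rabs_right in H2; lra.
Qed.

Lemma phi_neg x : x <= 0 -> phi a 0 f x = - x.
Proof.
  intros Hx. unfold phi, Finv. rewrite xplus0. apply inv_on_eq.
  - lra.
  - unfold Falpha. rewrite Hev. ring.
  - intros s Hs E. unfold Falpha in E.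
    assert (E' : f s = f (-x)) by (rewrite Hev; lra).
    destruct (Rtotal_order s (-x)) as [L|[L|L]]; auto.
    + pose proof (fmono s (-x) Hs L); lra.
    + pose proof (fmono (-x) s ltac:(lra) L); lra.
Qed.

Lemma delta_neg x : x <= 0 -> delta a 0 f x = f x + x.
Proof.
  intros Hx. unfold delta. rewrite phi_neg by auto. unfold Falpha. field.
Qed.

Lemma Dge x : -a <= x <= a -> -1 <= Derive f x.
Proof.
  intros Hx.
  assert (Da : -1 <= Derive f (-a)).
  { apply (dq_left_ge f (-a) _ 1); [apply DL|lra|].
    intros h Hh. rewrite !Habs by (rewrite Rabs_left; lra).
    rewrite !Rabs_left by lra. apply Req_le. field. lra. }
  destruct (Req_dec x (-a)) as [E|E]; [subst; auto|].
  pose proof (tangent x (-a) Hx ltac:(lra)).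
  pose proof (tangent (-a) x ltac:(lra) Hx).
  nra.
Qed.

Lemma hmono x y : x <= y -> y <= 0 -> f x + x <= f y + y.
Proof.
  intros Hxy Hy.
  assert (Hl : forall z, z <= -a -> f z + z = 0).
  { intros z Hz. rewrite Habs by (rewrite Rabs_left; lra). rewrite Rabs_left; lra. }
  assert (Hm : forall z, -a <= z <= 0 -> 0 <= f z + z).
  { intros z Hz. pose proof (tangent (-a) z ltac:(lra) ltac:(lra)).
    pose proof (Dge (-a) ltac:(lra)). pose proof (Hl (-a) ltac:(lra)). nra. }
  destruct (Rle_dec y (-a)).
  - rewrite (Hl x), (Hl y); lra.
  - destruct (Rle_dec x (-a)).
    + rewrite (Hl x) by lra. apply Hm; lra.
    + pose proof (tangent x y ltac:(lra) ltac:(lra)). pose proof (Dge x ltac:(lra)). nra.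
Qed.

Lemma tau_eq x0 : x0 <= 0 -> tau a 0 f (2 * x0 + f x0) = x0.
Proof.
  intros Hx0. unfold tau. rewrite xplus0. apply inv_on_eq; auto.
  - rewrite delta_neg by auto. ring.
  - intros x Hx E. rewrite delta_neg in E by auto.
    destruct (Rtotal_order x x0) as [L|[L|L]]; auto.
    + pose proof (hmono x x0 ltac:(lra) Hx0); lra.
    + pose proof (hmono x0 x ltac:(lra) Hx); lra.
Qed.

Lemma sa : s_alpha a 0 f = f 0.
Proof. unfold s_alpha. rewrite xplus0, delta_neg by lra. ring. Qed.

End Main.

Theorem corollary3p19 (a : R) (f : R -> R) :
  0 < a -> in_Ca a f ->
  (forall x, x <= - a -> Sh a 0 f x = f x) /\
  (forall x, - a < x < 0 -> Sh a 0 f (2 * x + f x) = f x) /\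
  (forall x, f 0 <= x -> Sh a 0 f x = x).
Proof.
  intros Ha [Hder [_ [Hev [Habs Hcvx]]]].
  pose proof (sa a f Ha Hder Hev Habs Hcvx) as Sa.
  pose proof (tau_eq a f Ha Hder Hev Habs Hcvx) as Te.
  pose proof (hmono a f Ha Hder Habs Hcvx) as Hm.
  assert (f0 : 0 <= f 0).
  { pose proof (Hm (-a) 0 ltac:(lra) ltac:(lra)).
    rewrite Habs in H by (rewrite Rabs_left; lra). rewrite Rabs_left in H; lra. }
  split; [|split].
  - intros x Hx. unfold Sh. rewrite Sa.
    destruct (Rle_dec x (f 0)); [|lra].
    assert (E : 2 * x + f x = x).
    { rewrite Habs by (rewrite Rabs_left; lra). rewrite Rabs_left; lra. }
    pose proof (Te x ltac:(lra)) as T. rewrite E in T. rewrite T. unfold Falpha. ring.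
  - intros x Hx. unfold Sh. rewrite Sa.
    destruct (Rle_dec (2 * x + f x) (f 0)).
    + rewrite Te by lra. unfold Falpha. ring.
    + exfalso. pose proof (Hm x 0 ltac:(lra) ltac:(lra)). lra.
  - intros x Hx. unfold Sh. rewrite Sa.
    destruct (Rle_dec x (f 0)); auto.
    assert (x = f 0) by lra. subst x.
    pose proof (Te 0 ltac:(lra)) as T.
    replace (2 * 0 + f 0) with (f 0) in T by ring. rewrite T. unfold Falpha. ring.
Qed.
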